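(* Let $x\in\mathbb{R}^n$ be fixed, and for $j\in\{1,\dots,N\}$ let \[ h_j(u)=\gamma_j(x)+u^2+r_jq_ju(u+2\beta(x)),\qquad u\in\mathbb{R}, \] where $r_j\ge0$ are constants, $\gamma_j(x)\ge0$, $\beta(x)\in\mathbb{R}$, and $q_1<q_2<\dots<q_N$ are numbers in $[0,1]$. Let $h=[h_1,\dots,h_N]'$ and $U(x)=\{u\in\mathbb{R}:u(u+2\beta(x))\le0\}$. Then $U(x)$ is compact and \[ \inf_{u\in\mathbb{R}}\sup_{p\in\mathcal{S}_{N-1}}p'h(u)=\inf_{u\in U(x)}\sup_{p\in\mathcal{S}_{N-1}}p'h(u),\qquad \sup_{p\in\mathcal{S}_{N-1}}\inf_{u\in\mathbb{R}}p'h(u)=\sup_{p\in\mathcal{S}_{N-1}}\inf_{u\in U(x)}p'h(u). \] Moreover, let $a_\circ\in\{1,\dots,N\}$, $a_\circ\ne1$, and suppose $r_j=r>0$ and $\gamma_j(x)=\gamma(x)$ for all $j\ne a_\circ$. Then for any $j,k\in\{1,\dots,N\}\setminus\{a_\circ\}$ with $j<k$, $h_j(u)>h_k(u)$ for all $u$ in the interior of $U(x)$.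
   Context: $\mathcal{S}_{N-1}=\{p\in\mathbb{R}^N:p_j\ge0,\sum_jp_j=1\}$ is the unit simplex. *)

(* Defs.v *)
From HB Require Import structures.
From mathcomp Require Import all_boot all_order all_algebra.
From mathcomp Require Import all_classical all_reals all_analysis.
Set Implicit Arguments. Unset Strict Implicit. Unset Printing Implicit Defensive.
Import Order.TTheory GRing.Theory Num.Theory numFieldNormedType.Exports.
Local Open Scope ring_scope.
Local Open Scope classical_set_scope.

Definition simplex (R : realType) (N : nat) : set ('I_N -> R) :=
  [set p | (forall j, 0 <= p j) /\ \sum_(j < N) p j = 1].

Definition hfun (R : realType) (n N : nat) (gamma : 'I_N -> 'rV[R]_n -> R)
  (r q : 'I_N -> R) (beta : 'rV[R]_n -> R) (x : 'rV[R]_n) (j : 'I_N) (u : R) : R :=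
  gamma j x + u ^+ 2 + r j * q j * u * (u + 2 * beta x).

Definition pdot (R : realType) (N : nat) (p : 'I_N -> R) (hu : 'I_N -> R) : R :=
  \sum_(j < N) p j * hu j.

Definition Uset (R : realType) (n : nat) (beta : 'rV[R]_n -> R) (x : 'rV[R]_n) : set R :=
  [set u | u * (u + 2 * beta x) <= 0].

(* Main.v *)
Require Import Defs.
From HB Require Import structures.
From mathcomp Require Import all_boot all_order all_algebra.
From mathcomp Require Import all_classical all_reals all_analysis.
Import Order.TTheory GRing.Theory Num.Theory numFieldNormedType.Exports.
Local Open Scope ring_scope.
Local Open Scope classical_set_scope.

From mathcomp Require Import ring lra.
Lemma inf_reduce (R : realType) (F : R -> \bar R) (U : set R) :
  (forall u, exists2 v, U v & (F v <= F u)%E) ->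
  ereal_inf [set F u | u in [set: R]] = ereal_inf [set F u | u in U].
Proof.
move=> HF; apply/eqP; rewrite eq_le; apply/andP; split.
  by apply: le_ereal_inf => y [u Uu <-]; exists u.
apply/ereal_infP => y [u _ <-]; have [v Uv Hv] := HF u.
by apply: ereal_inf_le; exists (F v) => //; exists v.
Qed.

Lemma U_compact (R : realType) (b : R) : compact [set u : R | u * (u + 2 * b) <= 0].
Proof.
have [b0|b0] := leP 0 b.
  have -> : [set u : R | u * (u + 2 * b) <= 0] = `[- (2 * b), 0]%classic.
    rewrite predeqE => u; rewrite /= in_itv /=; split.
      move=> H; apply/andP; split; nra.
    by move=> /andP[H1 H2]; nra.
  exact: segment_compact.
have -> : [set u : R | u * (u + 2 * b) <= 0] = `[0, - (2 * b)]%classic.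
  rewrite predeqE => u; rewrite /= in_itv /=; split.
    move=> H; apply/andP; split; nra.
  by move=> /andP[H1 H2]; nra.
exact: segment_compact.
Qed.

Lemma interior_lt (R : realType) (b u : R) :
  interior [set u : R | u * (u + 2 * b) <= 0] u -> u * (u + 2 * b) < 0.
Proof.
move=> /nbhs_ballP [e e0 He].
rewrite lt_neqAle; apply/andP; split; last first.
  by apply: (He u); apply: ballxx.
apply/negP => /eqP H0.
pose s : R := if 0 <= u + b then 1 else -1.
pose v := u + s * (e / 2).
have Hv : ball u e v.
  rewrite /ball /= /v opprD addrA subrr add0r normrN normrM.
  have -> : `|s| = 1 by rewrite /s; case: ifP => _; rewrite ?normrN normr1.
  rewrite mul1r ger0_norm; last by rewrite divr_ge0 // ltW.
  by rewrite ltr_pdivrMr // ltr_pMr // ltr1n.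
have := He v Hv; rewrite /= /v.
have e2 : 0 < e / 2 by rewrite divr_gt0.
rewrite /s; case: ifP => Hs; nra.
Qed.

Theorem lemma2 (R : realType) (n N : nat) (x : 'rV[R]_n)
  (gamma : 'I_N -> 'rV[R]_n -> R) (r q : 'I_N -> R) (beta : 'rV[R]_n -> R)
  (hr : forall j, 0 <= r j) (hgamma : forall j, 0 <= gamma j x)
  (hq01 : forall j, 0 <= q j <= 1)
  (hqinc : forall j k : 'I_N, (j < k)%N -> q j < q k) :
  let h := hfun gamma r q beta x in
  let U := Uset beta x in
  [/\ compact U,
    ereal_inf [set ereal_sup [set (pdot p (h ^~ u))%:E | p in @simplex R N] | u in [set: R]]
    = ereal_inf [set ereal_sup [set (pdot p (h ^~ u))%:E | p in @simplex R N] | u in U],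
    ereal_sup [set ereal_inf [set (pdot p (h ^~ u))%:E | u in [set: R]] | p in @simplex R N]
    = ereal_sup [set ereal_inf [set (pdot p (h ^~ u))%:E | u in U] | p in @simplex R N]
  & forall (a0 : 'I_N), (val a0 != 0)%N ->
    forall (r0 g0 : R), 0 < r0 ->
    (forall j, j != a0 -> r j = r0 /\ gamma j x = g0) ->
    forall j k : 'I_N, j != a0 -> k != a0 -> (j < k)%N ->
    forall u : R, interior U u -> h k u < h j u].
Proof.
move=> h U.
have key : forall u, exists2 v, U v & forall p, simplex p ->
    pdot p (h ^~ v) <= pdot p (h ^~ u).
  move=> u; have [Uu|nUu] := boolP (u * (u + 2 * beta x) <= 0).
    by exists u.
  exists 0; first by rewrite /U /Uset /= mul0r.
  move=> p [p0 _]; apply: ler_sum => j _; apply: ler_wpM2l => //.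
  rewrite /h /hfun; rewrite -ltNge in nUu.
  have := hr j; have := hq01 j => /andP[q0 _] r0.
  have rq : 0 <= r j * q j by rewrite mulr_ge0.
  nra.
split.
- exact: U_compact.
- apply: inf_reduce => u; have [v Uv Hv] := key u; exists v => //.
  apply/ereal_supP => y [p Sp <-].
  apply: le_trans (ereal_sup_ubound _); last by exists p.
  by rewrite lee_fin; apply: Hv.
- congr ereal_sup; apply/funext => y; apply/propext; split.
  + move=> [p Sp <-]; exists p => //; rewrite (@inf_reduce R (fun u => (pdot p (h ^~ u))%:E) U) // => u.
    have [v Uv Hv] := key u; exists v => //; rewrite lee_fin; exact: Hv.
  + move=> [p Sp <-]; exists p => //; rewrite (@inf_reduce R (fun u => (pdot p (h ^~ u))%:E) U) // => u.
    have [v Uv Hv] := key u; exists v => //; rewrite lee_fin; exact: Hv.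
- move=> a0 _ r0 g0 r0p Hrg j k ja ka jk u Iu.
  have Hu := @interior_lt R (beta x) u Iu.
  have [rj gj] := Hrg j ja; have [rk gk] := Hrg k ka.
  have qjk := hqinc j k jk.
  rewrite /h /hfun rj gj rk gk.
  have H0 : 0 < r0 * (q k - q j) by rewrite mulr_gt0 // subr_gt0.
  rewrite -subr_lt0.
  have -> : g0 + u ^+ 2 + r0 * q k * u * (u + 2 * beta x) -
    (g0 + u ^+ 2 + r0 * q j * u * (u + 2 * beta x)) =
    r0 * (q k - q j) * (u * (u + 2 * beta x)) by ring.
  by rewrite pmulr_rlt0.
Qed.
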